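(* Let $k\geq3$ and let $\lambda,\mu\in\mathbb{C}$ satisfy $$\Big(\lambda+\frac{k-2}{3}\Big)\Big(\mu-\frac{k+1}{3}\Big)+\frac{1}{36}(k+1)(k-2)=0.$$ Define $W:\mathcal{D}^k_{\lambda,\mu}(S^1)\to\mathcal{F}_{\mu-\lambda-k+2}$ by $$W\Big(\sum_{i=0}^k a_i(x)\frac{d^i}{dx^i}\Big)=\big(\alpha_2\,a_k''(x)+\alpha_1\,a_{k-1}'(x)+\alpha_0\,a_{k-2}(x)\big)(dx)^{\mu-\lambda-k+2},$$ where $\alpha_2=\tfrac23 k(k-1)(k+3\lambda-2)^2$, $\alpha_1=2(k-1)(k+3\lambda-2)(2-2\lambda-k)$, $\alpha_0=3k^2+12\lambda k+12\lambda^2-11k-24\lambda+10$. Then $W$ is well defined (independent of the coordinate $x$) and $\mathrm{Diff}(S^1)$-equivariant.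
   Context: For $\lambda\in\mathbb{C}$, $\mathcal{F}_\lambda$ denotes the space of smooth $\lambda$-densities $\phi(x)(dx)^\lambda$ on $S^1$ with $\mathrm{Diff}(S^1)$-action $\rho^\lambda_{f^{-1}}:\phi(x)(dx)^\lambda\mapsto (f'(x))^\lambda\phi(f(x))(dx)^\lambda$. $\mathcal{D}^k_{\lambda,\mu}(S^1)$ is the space of linear differential operators $A=\sum_{i=0}^k a_i(x)\frac{d^i}{dx^i}:\mathcal{F}_\lambda\to\mathcal{F}_\mu$ of order $\le k$ (in a local coordinate $x$), with $\mathrm{Diff}(S^1)$-action $A\mapsto\rho^\mu_f\circ A\circ\rho^\lambda_{f^{-1}}$. *)

(* Defs.v *)
From Stdlib Require Import Reals.
From Coquelicot Require Import Coquelicot.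
Open Scope R_scope.

(* A complex-valued function of the real variable x (a lift to R of a
   function on S^1 = R / 2 pi Z). *)
Definition CFun := R -> C.

Definition cre (phi : CFun) : R -> R := fun x => Re (phi x).
Definition cim (phi : CFun) : R -> R := fun x => Im (phi x).

Definition cderiv_n (n : nat) (phi : CFun) : CFun :=
  fun x => (Derive_n (cre phi) n x, Derive_n (cim phi) n x).

Definition smoothR (f : R -> R) : Prop := forall n x, ex_derive_n f n x.
Definition smoothC (phi : CFun) : Prop := smoothR (cre phi) /\ smoothR (cim phi).

Definition smooth_S1 (phi : CFun) : Prop :=
  smoothC phi /\ forall x, phi (x + 2 * PI) = phi x.

(* lift to R of an orientation-preserving diffeomorphism of S^1 *)
Definition diffeo_lift (g : R -> R) : Prop :=
  smoothR g /\ (forall x, 0 < Derive g x) /\ (forall x, g (x + 2 * PI) = g x + 2 * PI).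

(* t^l for t > 0 real and l complex: exp(l ln t) *)
Definition cpow (t : R) (l : C) : C :=
  (exp (Re l * ln t) * cos (Im l * ln t), exp (Re l * ln t) * sin (Im l * ln t)).

(* rho^l_{g^{-1}} : phi(x)(dx)^l |-> (g'(x))^l phi(g(x)) (dx)^l *)
Definition rho_inv (l : C) (g : R -> R) (phi : CFun) : CFun :=
  fun x => Cmult (cpow (Derive g x) l) (phi (g x)).

Fixpoint csum (f : nat -> C) (n : nat) : C :=
  match n with
  | O => f O
  | S m => Cplus (csum f m) (f (S m))
  end.

Definition apply_op (k : nat) (a : nat -> CFun) (phi : CFun) : CFun :=
  fun x => csum (fun i => Cmult (a i x) (cderiv_n i phi x)) k.

Definition kC (k : nat) : C := RtoC (INR k).

Definition alpha2 (k : nat) (l : C) : C :=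
  (RtoC (2/3) * kC k * (kC k - 1) * (kC k + 3 * l - 2) * (kC k + 3 * l - 2))%C.
Definition alpha1 (k : nat) (l : C) : C :=
  (2 * (kC k - 1) * (kC k + 3 * l - 2) * (2 - 2 * l - kC k))%C.
Definition alpha0 (k : nat) (l : C) : C :=
  (3 * kC k * kC k + 12 * l * kC k + 12 * l * l - 11 * kC k - 24 * l + 10)%C.

Definition Wop (k : nat) (l : C) (a : nat -> CFun) : CFun :=
  fun x => (alpha2 k l * cderiv_n 2 (a k) x
            + alpha1 k l * cderiv_n 1 (a (k - 1)%nat) x
            + alpha0 k l * a (k - 2)%nat x)%C.

(* Main.v *)
Require Import Defs.
From Stdlib Require Import Reals Lra Lia ZArith FunctionalExtensionality.
From Coquelicot Require Import Coquelicot.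
Open Scope R_scope.

Lemma SR_exd f : smoothR f -> forall x, ex_derive f x.
Proof. intros H x. exact (H 1%nat x). Qed.

Lemma Derive_n_S f n x : Derive_n f (S n) x = Derive_n (Derive f) n x.
Proof.
  revert x; induction n as [|n IH]; intros x. reflexivity.
  simpl. apply Derive_ext. intros t. apply IH.
Qed.

Lemma SR_Derive f : smoothR f -> smoothR (Derive f).
Proof.
  intros H n x. destruct n as [|n]. exact I.
  simpl. pose proof (H (S (S n)) x) as H2. simpl in H2.
  eapply ex_derive_ext; [|exact H2]. intros t. exact (Derive_n_S f n t).
Qed.

Lemma SR_of_Derive f : (forall x, ex_derive f x) -> smoothR (Derive f) -> smoothR f.
Proof.
  intros H1 H2 n x. destruct n as [|n]. exact I.
  destruct n as [|n]. simpl. apply H1.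
  pose proof (H2 (S n) x) as H3. simpl in H3 |- *.
  eapply ex_derive_ext; [|exact H3]. intros t. symmetry. exact (Derive_n_S f n t).
Qed.
Inductive Sums (G : (R->R) -> Prop) : (R->R) -> Prop :=
| Sg f : G f -> Sums G f
| Sp f h : Sums G f -> Sums G h -> Sums G (fun x => f x + h x).

Lemma Sums_ext G F H : (forall x, F x = H x) -> Sums G H -> Sums G F.
Proof. intros E S. replace F with H; auto. apply functional_extensionality; auto. Qed.

Lemma Sums_exd G : (forall f, G f -> forall x, ex_derive f x) ->
  forall f, Sums G f -> forall x, ex_derive f x.
Proof.
  intros HG f Hf; induction Hf; intros x; auto. exact (ex_derive_plus f h x (IHHf1 x) (IHHf2 x)).
Qed.

Lemma Sums_Derive G : (forall f, G f -> forall x, ex_derive f x) ->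
  (forall f, G f -> Sums G (Derive f)) -> forall f, Sums G f -> Sums G (Derive f).
Proof.
  intros HG HD f Hf; induction Hf; auto.
  replace (Derive (fun x => f x + h x)) with (fun x => Derive f x + Derive h x).
  now constructor.
  apply functional_extensionality; intros x. rewrite Derive_plus; auto;
  eapply Sums_exd; eauto.
Qed.

Lemma Sums_smooth G : (forall f, G f -> forall x, ex_derive f x) ->
  (forall f, G f -> Sums G (Derive f)) -> forall f, Sums G f -> smoothR f.
Proof.
  intros HG HD.
  assert (P : forall n f, Sums G f -> forall x, ex_derive (Derive_n f n) x).
  { induction n as [|n IH]; intros f Hf x.
    - eapply ex_derive_ext; [|eapply Sums_exd; eauto]. intros t; reflexivity.
    - eapply ex_derive_ext; [|apply (IH (Derive f)); eapply Sums_Derive; eauto].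
      intros t. symmetry. apply Derive_n_S. }
  intros f Hf n x. destruct n; [exact I|]. apply P; auto.
Qed.

Lemma SR_plus f h : smoothR f -> smoothR h -> smoothR (fun x => f x + h x).
Proof.
  intros Hf Hh. apply (Sums_smooth smoothR).
  - apply SR_exd.
  - intros u Hu. constructor. now apply SR_Derive.
  - constructor; constructor; auto.
Qed.

Lemma SR_const c : smoothR (fun _ => c).
Proof. intros n x. apply ex_derive_n_const. Qed.

Lemma SR_id : smoothR (fun x => x).
Proof.
  apply SR_of_Derive. intros; apply ex_derive_id.
  replace (Derive (fun x => x)) with (fun _ : R => 1). apply SR_const.
  apply functional_extensionality; intros; now rewrite Derive_id.
Qed.

Lemma SR_scal c f : smoothR f -> smoothR (fun x => c * f x).
Proof. intros H n x. apply ex_derive_n_scal_l, H. Qed.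

Lemma SR_opp f : smoothR f -> smoothR (fun x => - f x).
Proof. intros H n x. apply ex_derive_n_opp, H. Qed.

Lemma SR_minus f h : smoothR f -> smoothR h -> smoothR (fun x => f x - h x).
Proof. intros. apply (SR_plus f (fun x => - h x)); auto. now apply SR_opp. Qed.

Lemma SR_mult f h : smoothR f -> smoothR h -> smoothR (fun x => f x * h x).
Proof.
  intros Hf Hh.
  apply (Sums_smooth (fun F => exists u v, smoothR u /\ smoothR v /\ F = (fun x => u x * v x))).
  - intros F [u [v [Hu [Hv ->]]]] x. apply ex_derive_mult; apply SR_exd; auto.
  - intros F [u [v [Hu [Hv ->]]]].
    apply (Sums_ext _ _ (fun x => Derive u x * v x + u x * Derive v x)).
    + intros x. rewrite Derive_mult; auto; apply SR_exd; auto.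
    + constructor; constructor.
      exists (Derive u), v; repeat split; auto using SR_Derive.
      exists u, (Derive v); repeat split; auto using SR_Derive.
  - constructor. exists f, h; auto.
Qed.

Lemma SR_comp f g : smoothR f -> smoothR g -> smoothR (fun x => f (g x)).
Proof.
  intros Hf Hg.
  apply (Sums_smooth (fun F => exists u v, smoothR u /\ smoothR v /\ F = (fun x => u (g x) * v x))).
  - intros F [u [v [Hu [Hv ->]]]] x. apply ex_derive_mult.
    apply ex_derive_comp; apply SR_exd; auto. apply SR_exd; auto.
  - intros F [u [v [Hu [Hv ->]]]].
    apply (Sums_ext _ _
      (fun x => Derive u (g x) * (Derive g x * v x) + u (g x) * Derive v x)).
    + intros x.
      assert (E1: ex_derive u (g x)) by (apply SR_exd; auto).
      assert (E2: ex_derive g x) by (apply SR_exd; auto).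
      assert (E3: ex_derive v x) by (apply SR_exd; auto).
      assert (E4: ex_derive (fun x => u (g x)) x) by (apply ex_derive_comp; auto).
      rewrite Derive_mult by auto. rewrite Derive_comp by auto. ring.
    + constructor; constructor.
      exists (Derive u), (fun x => Derive g x * v x); repeat split; auto using SR_Derive, SR_mult.
      exists u, (Derive v); repeat split; auto using SR_Derive.
  - apply (Sums_ext _ _ (fun x => f (g x) * 1)). intros; ring.
    constructor. exists f, (fun _ => 1). split; auto. split. apply SR_const. reflexivity.
Qed.

Lemma SR_exp : smoothR exp.
Proof.
  apply (Sums_smooth (fun F => F = exp)).
  - intros F -> x. apply ex_derive_Reals_1. apply derivable_pt_exp.
  - intros F ->. replace (Derive exp) with exp. now constructor.
    apply functional_extensionality; intros x. symmetry.
    apply is_derive_unique. apply is_derive_Reals. apply derivable_pt_lim_exp.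
  - now constructor.
Qed.

Lemma SR_sincos : smoothR sin /\ smoothR cos.
Proof.
  assert (Hs : Derive sin = cos).
  { apply functional_extensionality; intros x. apply is_derive_unique.
    apply is_derive_Reals. apply derivable_pt_lim_sin. }
  assert (Hc : Derive cos = fun x => - sin x).
  { apply functional_extensionality; intros x. apply is_derive_unique.
    apply is_derive_Reals. apply derivable_pt_lim_cos. }
  set (G := fun F => F = sin \/ F = cos \/ F = (fun x => - sin x) \/ F = (fun x => - cos x)).
  assert (HG1 : forall f, G f -> forall x, ex_derive f x).
  { intros F [-> | [-> | [-> | ->]]] x.
    - apply ex_derive_Reals_1. apply derivable_pt_sin.
    - apply ex_derive_Reals_1. apply derivable_pt_cos.
    - exact (ex_derive_opp sin x (ex_derive_Reals_1 _ _ (derivable_pt_sin x))).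
    - exact (ex_derive_opp cos x (ex_derive_Reals_1 _ _ (derivable_pt_cos x))). }
  assert (HG2 : forall f, G f -> Sums G (Derive f)).
  { intros F [-> | [-> | [-> | ->]]]; constructor; unfold G.
    - rewrite Hs; auto.
    - rewrite Hc; auto.
    - right; right; right. apply functional_extensionality; intros x.
      rewrite Derive_opp. now rewrite Hs.
    - left. apply functional_extensionality; intros x.
      rewrite Derive_opp. rewrite Hc. ring. }
  split; apply (Sums_smooth G); auto; constructor; unfold G; auto.
Qed.

Lemma SR_inv h : smoothR h -> (forall x, 0 < h x) -> smoothR (fun x => / h x).
Proof.
  intros Hh Hp.
  assert (Hx : forall x, ex_derive (fun y => / h y) x).
  { intros x. apply ex_derive_inv. apply SR_exd; auto. apply Rgt_not_eq, Hp. }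
  apply (Sums_smooth (fun F => exists w n, smoothR w /\ F = (fun x => w x * (/ h x) ^ n))).
  - intros F [w [n [Hw ->]]] x. apply ex_derive_mult. apply SR_exd; auto.
    apply ex_derive_pow. auto.
  - intros F [w [n [Hw ->]]].
    apply (Sums_ext _ _ (fun x => Derive w x * (/ h x) ^ n +
                                  (- INR n * w x * Derive h x) * (/ h x) ^ (S n))).
    + intros x. assert (hx := Hp x).
      rewrite Derive_mult. rewrite Derive_pow. rewrite Derive_inv.
      assert (E: - Derive h x / h x ^2 = - Derive h x * (/ h x)^2) by (field; lra).
      rewrite E. destruct n. simpl; ring. remember (INR (S n)) as r. simpl. ring.
      apply SR_exd; auto. lra. auto. apply SR_exd; auto. apply ex_derive_pow; auto.
    + constructor; constructor.
      * exists (Derive w), n. split; auto using SR_Derive.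
      * exists (fun x => - INR n * w x * Derive h x), (S n). split; auto.
        apply SR_mult. apply SR_scal; auto. apply SR_Derive; auto.
  - apply (Sums_ext _ _ (fun x => 1 * (/ h x) ^ 1)). intros; ring.
    constructor. exists (fun _ => 1), 1%nat. split; auto. apply SR_const.
Qed.

Lemma SR_ln h : smoothR h -> (forall x, 0 < h x) -> smoothR (fun x => ln (h x)).
Proof.
  intros Hh Hp.
  assert (Hd : forall x, is_derive (fun y => ln (h y)) x (Derive h x * / h x)).
  { intros x. apply (is_derive_comp ln h x (/ h x) (Derive h x)).
    apply is_derive_Reals. apply derivable_pt_lim_ln. auto.
    apply Derive_correct. apply SR_exd; auto. }
  apply SR_of_Derive. intros x. eexists; eauto.
  replace (Derive (fun y => ln (h y))) with (fun x => Derive h x * / h x).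
  apply SR_mult. apply SR_Derive; auto. apply SR_inv; auto.
  apply functional_extensionality; intros x. symmetry. apply is_derive_unique; auto.
Qed.

Definition dC (f : CFun) : CFun := cderiv_n 1 f.

Lemma dC_eq f x : dC f x = (Derive (cre f) x, Derive (cim f) x).
Proof. reflexivity. Qed.

Lemma cderiv_S j f x : cderiv_n (S j) f x = dC (cderiv_n j f) x.
Proof. reflexivity. Qed.

Lemma cderiv_0 f x : cderiv_n 0 f x = f x.
Proof. unfold cderiv_n, cre, cim. simpl. destruct (f x); reflexivity. Qed.

Lemma Ceq (a b : C) : Re a = Re b -> Im a = Im b -> a = b.
Proof. destruct a, b; simpl; intros -> ->; reflexivity. Qed.

Lemma SC_ext f h : smoothC f -> (forall x, f x = h x) -> smoothC h.
Proof. intros H E. replace h with f; auto. apply functional_extensionality; auto. Qed.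

Lemma SC_plus f h : smoothC f -> smoothC h -> smoothC (fun y => (f y + h y)%C).
Proof. intros [] []; split; apply SR_plus; auto. Qed.

Lemma SC_mult f h : smoothC f -> smoothC h -> smoothC (fun y => (f y * h y)%C).
Proof.
  intros [] []; split.
  - apply (SR_minus (fun y => Re (f y) * Re (h y)) (fun y => Im (f y) * Im (h y))); apply SR_mult; auto.
  - apply (SR_plus (fun y => Re (f y) * Im (h y)) (fun y => Im (f y) * Re (h y))); apply SR_mult; auto.
Qed.

Lemma SC_const c : smoothC (fun _ => c).
Proof. split; [exact (SR_const (Re c)) | exact (SR_const (Im c))]. Qed.

Lemma SC_RtoC r : smoothR r -> smoothC (fun y => RtoC (r y)).
Proof. intros H; split. exact H. exact (SR_const 0). Qed.

Lemma SC_dC f : smoothC f -> smoothC (dC f).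
Proof. intros []; split; apply SR_Derive; auto. Qed.

Lemma SC_comp f g : smoothC f -> smoothR g -> smoothC (fun y => f (g y)).
Proof. intros [] Hg; split; [apply (SR_comp (cre f) g) | apply (SR_comp (cim f) g)]; auto. Qed.

Definition cexpC (z : C) : C := (exp (Re z) * cos (Im z), exp (Re z) * sin (Im z)).

Lemma SC_cexp u : smoothC u -> smoothC (fun y => cexpC (u y)).
Proof.
  intros [H1 H2]. destruct SR_sincos as [Hs Hc]. split.
  - apply (SR_mult (fun y => exp (Re (u y))) (fun y => cos (Im (u y)))).
    apply (SR_comp exp (cre u)); auto using SR_exp. apply (SR_comp cos (cim u)); auto.
  - apply (SR_mult (fun y => exp (Re (u y))) (fun y => sin (Im (u y)))).
    apply (SR_comp exp (cre u)); auto using SR_exp. apply (SR_comp sin (cim u)); auto.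
Qed.

Lemma dC_plus f h x : smoothC f -> smoothC h -> dC (fun y => (f y + h y)%C) x = (dC f x + dC h x)%C.
Proof.
  intros [F1 F2] [H1 H2]. rewrite !dC_eq. apply Ceq; simpl.
  apply (Derive_plus (cre f) (cre h)); apply SR_exd; auto.
  apply (Derive_plus (cim f) (cim h)); apply SR_exd; auto.
Qed.

Lemma Dmm u1 v1 u2 v2 x : ex_derive u1 x -> ex_derive v1 x -> ex_derive u2 x -> ex_derive v2 x ->
 Derive (fun y => u1 y * v1 y - u2 y * v2 y) x = Derive u1 x * v1 x + u1 x * Derive v1 x - (Derive u2 x * v2 x + u2 x * Derive v2 x).
Proof. intros. apply is_derive_unique. auto_derive. tauto.
  change (fun x0 => u1 x0) with u1. change (fun x0 => u2 x0) with u2.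
  change (fun x0 => v1 x0) with v1. change (fun x0 => v2 x0) with v2. ring. Qed.
Lemma Dmp u1 v1 u2 v2 x : ex_derive u1 x -> ex_derive v1 x -> ex_derive u2 x -> ex_derive v2 x ->
 Derive (fun y => u1 y * v1 y + u2 y * v2 y) x = Derive u1 x * v1 x + u1 x * Derive v1 x + (Derive u2 x * v2 x + u2 x * Derive v2 x).
Proof. intros. apply is_derive_unique. auto_derive. tauto.
  change (fun x0 => u1 x0) with u1. change (fun x0 => u2 x0) with u2.
  change (fun x0 => v1 x0) with v1. change (fun x0 => v2 x0) with v2. ring. Qed.

Lemma dC_mult f h x : smoothC f -> smoothC h ->
  dC (fun y => (f y * h y)%C) x = (dC f x * h x + f x * dC h x)%C.
Proof.
  intros [F1 F2] [H1 H2].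
  pose proof (SR_exd _ F1 x). pose proof (SR_exd _ F2 x).
  pose proof (SR_exd _ H1 x). pose proof (SR_exd _ H2 x).
  rewrite !dC_eq. apply Ceq.
  - cbn [Re Im fst snd]. etransitivity. apply (Dmm (cre f) (cre h) (cim f) (cim h) x); auto.
    cbn [Re Im fst snd Cplus Cmult]. unfold cre, cim, Re, Im. ring.
  - cbn [Re Im fst snd]. etransitivity. apply (Dmp (cre f) (cim h) (cim f) (cre h) x); auto.
    cbn [Re Im fst snd Cplus Cmult]. unfold cre, cim, Re, Im. ring.
Qed.

Lemma Dcomp (u g : R -> R) x : ex_derive u (g x) -> ex_derive g x ->
  Derive (fun y => u (g y)) x = Derive g x * Derive u (g x).
Proof. intros. apply Derive_comp; auto. Qed.

Lemma Dec (a b : R -> R) x : ex_derive a x -> ex_derive b x ->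
  Derive (fun y => exp (a y) * cos (b y)) x = Derive a x * (exp (a x) * cos (b x)) - Derive b x * (exp (a x) * sin (b x)).
Proof. intros. apply is_derive_unique. auto_derive. tauto.
  change (fun x0 => a x0) with a. change (fun x0 => b x0) with b. ring. Qed.

Lemma Des (a b : R -> R) x : ex_derive a x -> ex_derive b x ->
  Derive (fun y => exp (a y) * sin (b y)) x = Derive a x * (exp (a x) * sin (b x)) + Derive b x * (exp (a x) * cos (b x)).
Proof. intros. apply is_derive_unique. auto_derive. tauto.
  change (fun x0 => a x0) with a. change (fun x0 => b x0) with b. ring. Qed.

Lemma dC_const c x : dC (fun _ => c) x = 0%C.
Proof. rewrite dC_eq. apply Ceq; simpl; exact (Derive_const _ x). Qed.

Lemma dC_RtoC r x : dC (fun y => RtoC (r y)) x = RtoC (Derive r x).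
Proof. rewrite dC_eq. apply Ceq; simpl. reflexivity. exact (Derive_const _ x). Qed.

Lemma dC_comp f g x : smoothC f -> smoothR g ->
  dC (fun y => f (g y)) x = (RtoC (Derive g x) * dC f (g x))%C.
Proof.
  intros [F1 F2] Hg. rewrite !dC_eq. apply Ceq; cbn [Re Im fst snd RtoC Cmult].
  - etransitivity. apply (Dcomp (cre f) g x). apply SR_exd; auto. apply SR_exd; auto. ring.
  - etransitivity. apply (Dcomp (cim f) g x). apply SR_exd; auto. apply SR_exd; auto. ring.
Qed.

Lemma dC_cexp u x : smoothC u -> dC (fun y => cexpC (u y)) x = (dC u x * cexpC (u x))%C.
Proof.
  intros [F1 F2]. rewrite !dC_eq. apply Ceq; cbn [Re Im fst snd Cmult].
  - etransitivity. apply (Dec (cre u) (cim u) x); apply SR_exd; auto.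
    unfold cexpC, cre, cim. cbn [Re Im fst snd]. ring.
  - etransitivity. apply (Des (cre u) (cim u) x); apply SR_exd; auto.
    unfold cexpC, cre, cim. cbn [Re Im fst snd]. ring.
Qed.

Lemma dC_scal c f x : smoothC f -> dC (fun y => (c * f y)%C) x = (c * dC f x)%C.
Proof.
  intros Hf. rewrite (dC_mult (fun _ => c) f x (SC_const c) Hf). rewrite dC_const.
  field.
Qed.

Lemma cexpC_add a b : cexpC (a + b) = (cexpC a * cexpC b)%C.
Proof.
  unfold cexpC. apply Ceq; cbn [Re Im fst snd Cplus Cmult]; unfold Re, Im;
  rewrite exp_plus; [rewrite cos_plus | rewrite sin_plus]; ring.
Qed.

Lemma cexpC_0 : cexpC 0 = 1%C.
Proof. unfold cexpC. apply Ceq; cbn [Re Im fst snd RtoC]; unfold Re, Im; simpl;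
  rewrite exp_0; try rewrite cos_0; try rewrite sin_0; ring. Qed.

Lemma cexpC_neq0 z : cexpC z <> 0%C.
Proof.
  intros H. assert (E: cexpC (z + - z) = 1%C).
  { replace (z + - z)%C with (RtoC 0). apply cexpC_0. apply Ceq; simpl; ring. }
  rewrite cexpC_add, H in E. rewrite Cmult_0_l in E.
  injection E. lra.
Qed.

Lemma cpow_cexp t l : cpow t l = cexpC (l * RtoC (ln t)).
Proof.
  unfold cpow, cexpC. apply Ceq; cbn [Re Im fst snd RtoC Cmult]; unfold Re, Im.
  - f_equal. f_equal. ring. f_equal. ring.
  - f_equal. f_equal. ring. f_equal. ring.
Qed.

Lemma cpow_add t a b : cpow t (a + b) = (cpow t a * cpow t b)%C.
Proof. rewrite !cpow_cexp, <- cexpC_add. f_equal. ring. Qed.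

Lemma cpow_ext t a b : a = b -> cpow t a = cpow t b.
Proof. intros ->; auto. Qed.

Lemma cpow_1 t : 0 < t -> cpow t 1 = RtoC t.
Proof.
  intros Ht. unfold cpow. apply Ceq; cbn [Re Im fst snd RtoC]; unfold Re, Im; simpl.
  all: rewrite Rmult_1_l, Rmult_0_l, exp_ln by auto; try rewrite cos_0; try rewrite sin_0; ring.
Qed.

Lemma cpow_0 t : cpow t 0 = 1%C.
Proof.
  unfold cpow. apply Ceq; cbn [Re Im fst snd RtoC]; unfold Re, Im; simpl.
  all: rewrite !Rmult_0_l, exp_0; try rewrite cos_0; try rewrite sin_0; ring.
Qed.

Lemma cpow_neq0 t l : cpow t l <> 0%C.
Proof. rewrite cpow_cexp. apply cexpC_neq0. Qed.

Lemma cpow_plus1 t a : 0 < t -> cpow t (a + 1) = (cpow t a * RtoC t)%C.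
Proof. intros. rewrite cpow_add, cpow_1; auto. Qed.

Section G.
Variable g : R -> R.
Hypothesis Hg1 : smoothR g.
Hypothesis Hg2 : forall x, 0 < Derive g x.

Definition G1 := Derive g.
Definition G2 := Derive (Derive g).
Definition G3 := Derive (Derive (Derive g)).
Definition HH := fun x => G2 x / G1 x.
Definition TT := fun x => G3 x / G1 x.

Lemma SR_G1 : smoothR G1. Proof. apply SR_Derive; auto. Qed.
Lemma SR_G2 : smoothR G2. Proof. apply SR_Derive, SR_Derive; auto. Qed.
Lemma SR_G3 : smoothR G3. Proof. apply SR_Derive, SR_Derive, SR_Derive; auto. Qed.
Lemma SR_HH : smoothR HH.
Proof. apply (SR_mult G2 (fun x => / G1 x)). apply SR_G2. apply SR_inv. apply SR_G1. apply Hg2. Qed.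
Lemma SR_TT : smoothR TT.
Proof. apply (SR_mult G3 (fun x => / G1 x)). apply SR_G3. apply SR_inv. apply SR_G1. apply Hg2. Qed.

Lemma D_HH x : Derive HH x = TT x - HH x * HH x.
Proof.
  unfold HH, TT. assert (h := Hg2 x).
  etransitivity. apply (Derive_div G2 G1 x). apply SR_exd, SR_G2. apply SR_exd, SR_G1.
  unfold G1 in *; lra. unfold G1, G2, G3 in *. field. lra.
Qed.

Lemma D_lnG1 x : Derive (fun y => ln (Derive g y)) x = HH x.
Proof.
  apply is_derive_unique. unfold HH, G1, G2.
  replace (Derive (Derive g) x / Derive g x) with (Derive (Derive g) x * / Derive g x) by (unfold Rdiv; ring).
  apply (is_derive_comp ln (Derive g) x (/ Derive g x) (Derive (Derive g) x)).
  apply is_derive_Reals. apply derivable_pt_lim_ln. auto.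
  apply Derive_correct. apply SR_exd, SR_G1.
Qed.

Lemma cp_fun e : (fun x => cpow (Derive g x) e) = (fun x => cexpC (e * RtoC (ln (Derive g x)))).
Proof. apply functional_extensionality; intros; apply cpow_cexp. Qed.

Lemma SC_cp e : smoothC (fun x => cpow (Derive g x) e).
Proof.
  rewrite cp_fun. apply SC_cexp. apply (SC_mult (fun _ => e)). apply SC_const.
  apply (SC_RtoC (fun x => ln (Derive g x))). apply SR_ln. apply SR_G1. auto.
Qed.

Lemma dC_cp e x : dC (fun x => cpow (Derive g x) e) x = (e * cpow (Derive g x) e * RtoC (HH x))%C.
Proof.
  rewrite cp_fun. rewrite dC_cexp.
  rewrite (dC_scal e (fun x => RtoC (ln (Derive g x)))).
  rewrite dC_RtoC, D_lnG1. rewrite <- cpow_cexp. ring.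
  apply (SC_RtoC (fun x => ln (Derive g x))). apply SR_ln. apply SR_G1. auto.
  apply (SC_mult (fun _ => e)). apply SC_const.
  apply (SC_RtoC (fun x => ln (Derive g x))). apply SR_ln. apply SR_G1. auto.
Qed.

End G.

Open Scope C_scope.

Lemma csum_ext (f h : nat -> C) n : (forall i, (i <= n)%nat -> f i = h i) -> csum f n = csum h n.
Proof. induction n; intros H; simpl. apply H; lia. rewrite IHn, H; auto. Qed.

Lemma csum_plus (f h : nat -> C) n : csum (fun i => f i + h i) n = csum f n + csum h n.
Proof. induction n; simpl; auto. rewrite IHn. ring. Qed.

Lemma csum_mult_l (c : C) (f : nat -> C) n : c * csum f n = csum (fun i => c * f i) n.
Proof. induction n; simpl; auto. rewrite <- IHn. ring. Qed.

Lemma csum_zero (f : nat -> C) n : (forall i, (i <= n)%nat -> f i = 0) -> csum f n = 0.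
Proof. induction n; intros H; simpl. apply H; lia. rewrite IHn, H; auto. ring. Qed.

Lemma csum_swap (F : nat -> nat -> C) J K :
  csum (fun j => csum (fun s => F j s) K) J = csum (fun s => csum (fun j => F j s) J) K.
Proof.
  induction J; simpl. reflexivity.
  rewrite IHJ. rewrite <- csum_plus. reflexivity.
Qed.

Lemma SC_csum (F : nat -> CFun) n : (forall i, (i <= n)%nat -> smoothC (F i)) ->
  smoothC (fun x => csum (fun i => F i x) n).
Proof.
  induction n; intros H; simpl. apply H; lia.
  apply (SC_plus (fun x => csum (fun i => F i x) n) (F (S n))); auto.
Qed.

Lemma dC_csum (F : nat -> CFun) n x : (forall i, (i <= n)%nat -> smoothC (F i)) ->
  dC (fun x => csum (fun i => F i x) n) x = csum (fun i => dC (F i) x) n.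
Proof.
  induction n; intros H; simpl. reflexivity.
  rewrite (dC_plus (fun x => csum (fun i => F i x) n) (F (S n))).
  rewrite IHn; auto. apply SC_csum; auto. apply H; lia.
Qed.

Fixpoint Cp (z : C) (n : nat) : C := match n with O => 1 | S m => z * Cp z m end.

Lemma csum_shift (N : C) (X : nat -> C) K :
  csum (fun s => match s with O => 0 | S s' => Cp N s * X s' end) (S K)
  = csum (fun s => Cp N (S s) * X s) K.
Proof.
  induction K. simpl. ring.
  change (csum (fun s => match s with O => 0 | S s' => Cp N s * X s' end) (S (S K)))
    with (csum (fun s => match s with O => 0 | S s' => Cp N s * X s' end) (S K)
          + Cp N (S (S K)) * X (S K)).
  rewrite IHK. reflexivity.
Qed.

Close Scope C_scope.

Fixpoint rsum (f : nat -> R) (n : nat) : R := match n with O => f O | S m => rsum f m + f (S m) end.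

Lemma Cmod_csum (f : nat -> C) n : Cmod (csum f n) <= rsum (fun i => Cmod (f i)) n.
Proof. induction n; simpl. lra. eapply Rle_trans. apply Cmod_triangle. lra. Qed.

Lemma rsum_le f h n : (forall i, (i <= n)%nat -> f i <= h i) -> rsum f n <= rsum h n.
Proof. induction n; intros H; simpl. apply H; lia. apply Rplus_le_compat; auto. Qed.

Lemma rsum_mult c f n : rsum (fun i => c * f i) n = c * rsum f n.
Proof. induction n; simpl; auto. rewrite IHn. ring. Qed.

Definition Nn (n : nat) : C := (0, INR n).

Lemma Cmod_Nn n : Cmod (Nn n) = INR n.
Proof.
  unfold Cmod, Nn; simpl. replace (0 * (0 * 1) + INR n * (INR n * 1)) with (INR n ^ 2) by ring.
  apply sqrt_pow2. apply pos_INR.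
Qed.

Lemma Cmod_Cp z n : Cmod (Cp z n) = Cmod z ^ n.
Proof. induction n; simpl. apply Cmod_1. rewrite Cmod_mult, IHn. ring. Qed.

Lemma archi r : exists n : nat, r < INR n.
Proof.
  destruct (archimed r) as [H1 _].
  destruct (Z_lt_le_dec (up r) 0) as [Hz|Hz].
  - exists 0%nat. simpl. apply IZR_lt in Hz. lra.
  - exists (Z.to_nat (up r)). rewrite INR_IZR_INZ. rewrite Z2Nat.id; auto.
Qed.

Lemma poly0 K (p : nat -> C) :
  (forall n : nat, csum (fun s => (Cp (Nn n) s * p s)%C) K = 0%C) ->
  forall s, (s <= K)%nat -> p s = 0%C.
Proof.
  induction K as [|K IH]; intros H.
  - intros s Hs. assert (s = 0%nat) by lia. subst. specialize (H 0%nat). simpl in H.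
    rewrite Cmult_1_l in H. exact H.
  - set (M := rsum (fun i => Cmod (p i)) K).
    assert (Hb : forall n, (1 <= n)%nat -> INR n * Cmod (p (S K)) <= M).
    { intros n Hn. specialize (H n). simpl in H.
      assert (E : (Cp (Nn n) (S K) * p (S K))%C = (- csum (fun s => (Cp (Nn n) s * p s)%C) K)%C).
      { simpl. rewrite <- (Cplus_0_l (- _)%C). rewrite <- H. simpl. ring. }
      assert (Hn1 : 1 <= INR n) by (apply (le_INR 1); auto).
      assert (E2 : Cmod (Cp (Nn n) (S K) * p (S K)) <= INR n ^ K * M).
      { rewrite E. rewrite Cmod_opp. eapply Rle_trans. apply Cmod_csum.
        unfold M. rewrite <- rsum_mult. apply rsum_le. intros i Hi.
        rewrite Cmod_mult, Cmod_Cp, Cmod_Nn. apply Rmult_le_compat_r. apply Cmod_ge_0.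
        apply Rle_pow; auto. }
      rewrite Cmod_mult, Cmod_Cp, Cmod_Nn in E2. simpl in E2.
      assert (Hpos : 0 < INR n ^ K) by (apply pow_lt; lra).
      apply (Rmult_le_reg_l (INR n ^ K)); auto. nra. }
    assert (Hp : p (S K) = 0%C).
    { apply Cmod_eq_0. destruct (Rle_lt_dec (Cmod (p (S K))) 0) as [Hle|Hlt].
      - pose proof (Cmod_ge_0 (p (S K))). lra.
      - exfalso. destruct (archi (M / Cmod (p (S K)))) as [n Hn].
        specialize (Hb (S n) ltac:(lia)). rewrite S_INR in Hb.
        assert (INR n * Cmod (p (S K)) > M).
        { apply (Rmult_lt_compat_r (Cmod (p (S K)))) in Hn; auto.
          unfold Rdiv in Hn. rewrite Rmult_assoc, Rinv_l in Hn; lra. }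
        pose proof (pos_INR n). nra. }
    assert (H' : forall n, csum (fun s => (Cp (Nn n) s * p s)%C) K = 0%C).
    { intros n. specialize (H n). simpl in H. rewrite Hp in H.
      rewrite Cmult_0_r, Cplus_0_r in H. exact H. }
    intros s Hs. destruct (Nat.eq_dec s (S K)). subst; auto. apply IH; auto. lia.
Qed.

Open Scope C_scope.

Lemma RtoC_S n : RtoC (INR (S n)) = RtoC (INR n) + 1.
Proof. rewrite S_INR. apply Ceq; unfold Re, Im; simpl; ring. Qed.

Lemma C2_neq0 : RtoC 2 <> 0.
Proof. intros H. injection H. lra. Qed.

Section Q.
Variable g : R -> R.
Hypothesis Hg1 : smoothR g.
Hypothesis Hg2 : forall x, (0 < Derive g x)%R.
Variable l : C.

Fixpoint qq (j s : nat) : CFun := match j with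
 | O => fun x => match s with O => cpow (Derive g x) l | S _ => 0 end
 | S j' => fun x => dC (qq j' s) x + match s with O => 0 | S s' => RtoC (Derive g x) * qq j' s' x end
 end.

Lemma SC_qq j : forall s, smoothC (qq j s).
Proof.
  induction j; intros s.
  - destruct s; simpl. apply SC_cp; auto. apply SC_const.
  - destruct s; simpl.
    + apply (SC_plus (dC (qq j 0)) (fun _ => 0)). apply SC_dC; auto. apply SC_const.
    + apply (SC_plus (dC (qq j (S s))) (fun x => RtoC (Derive g x) * qq j s x)).
      apply SC_dC; auto. apply (SC_mult (fun x => RtoC (Derive g x))); auto.
      apply SC_RtoC. apply SR_G1; auto.
Qed.

Lemma qq_zero j : forall s, (j < s)%nat -> forall x, qq j s x = 0.
Proof.
  induction j; intros s Hs x.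
  - destruct s. lia. reflexivity.
  - destruct s. lia. simpl.
    replace (qq j (S s)) with (fun _ : R => RtoC 0).
    rewrite dC_const. rewrite IHj by lia. ring.
    apply functional_extensionality; intros y. rewrite IHj; auto. lia.
Qed.

Lemma cp_S j x : cpow (Derive g x) (l + RtoC (INR (S j))) =
  cpow (Derive g x) (l + RtoC (INR j)) * RtoC (Derive g x).
Proof.
  rewrite <- cpow_plus1 by auto. apply cpow_ext. rewrite RtoC_S. ring.
Qed.

Lemma qq_diag j : forall x, qq j j x = cpow (Derive g x) (l + RtoC (INR j)).
Proof.
  induction j; intros x.
  - simpl. apply cpow_ext. apply Ceq; unfold Re, Im; simpl; ring.
  - change (qq (S j) (S j) x) with (dC (qq j (S j)) x + RtoC (Derive g x) * qq j j x).
    replace (qq j (S j)) with (fun _ : R => RtoC 0).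
    rewrite dC_const, IHj, cp_S. ring.
    apply functional_extensionality; intros y. rewrite qq_zero; auto.
Qed.

Lemma dC_ccr c e r x : smoothR r ->
  dC (fun x => c * cpow (Derive g x) e * RtoC (r x)) x =
  c * (e * cpow (Derive g x) e * RtoC (HH g x) * RtoC (r x) + cpow (Derive g x) e * RtoC (Derive r x)).
Proof.
  intros Hr.
  rewrite (dC_mult (fun x => c * cpow (Derive g x) e) (fun x => RtoC (r x))).
  rewrite (dC_scal c (fun x => cpow (Derive g x) e)).
  rewrite dC_cp, dC_RtoC; auto. ring.
  apply SC_cp; auto.
  apply (SC_mult (fun _ => c)). apply SC_const. apply SC_cp; auto.
  apply SC_RtoC; auto.
Qed.

Definition Aq (n : nat) : C := RtoC (INR n) * l + RtoC (INR n) * (RtoC (INR n) - 1) / 2.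

Lemma qq_sub1 j : forall x, qq (S j) j x = Aq (S j) * cpow (Derive g x) (l + RtoC (INR j)) * RtoC (HH g x).
Proof.
  induction j; intros x.
  - simpl. rewrite Cplus_0_r. rewrite dC_cp; auto. unfold Aq.
    replace (l + RtoC 0) with l by (apply Ceq; unfold Re, Im; simpl; ring).
    rewrite RtoC_S. simpl. field; apply C2_neq0.
  - change (qq (S (S j)) (S j) x) with
      (dC (qq (S j) (S j)) x + RtoC (Derive g x) * qq (S j) j x).
    replace (qq (S j) (S j)) with (fun x => cpow (Derive g x) (l + RtoC (INR (S j)))).
    rewrite dC_cp; auto. rewrite IHj. rewrite cp_S.
    unfold Aq. rewrite !RtoC_S. field; apply C2_neq0.
    apply functional_extensionality; intros y. rewrite qq_diag; auto.
Qed.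

Definition Bq (n : nat) : C :=
  let N := RtoC (INR n) in
  l * l * N * (N - 1) / 2 + l * (N * (N - 1) * (N - 2) / 2 - N * (N - 1) / 2)
  + N * (N - 1) * (N - 2) * (N - 3) / 8.
Definition Cq (n : nat) : C :=
  let N := RtoC (INR n) in l * N * (N - 1) / 2 + N * (N - 1) * (N - 2) / 6.

Lemma C6_neq0 : RtoC 6 <> 0.
Proof. intros H. injection H. lra. Qed.
Lemma C8_neq0 : RtoC 8 <> 0.
Proof. intros H. injection H. lra. Qed.

Lemma qq_sub2 j : forall x, qq (S (S j)) j x =
  cpow (Derive g x) (l + RtoC (INR j)) *
  (Bq (S (S j)) * RtoC (HH g x) * RtoC (HH g x) + Cq (S (S j)) * RtoC (TT g x)).
Proof.
  assert (HS := SR_HH g Hg1 Hg2).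
  induction j; intros x.
  - change (qq 2 0 x) with (dC (qq 1 0) x + 0).
    replace (qq 1 0) with (fun x => Aq 1 * cpow (Derive g x) (l + RtoC (INR 0)) * RtoC (HH g x)).
    rewrite Cplus_0_r. rewrite dC_ccr; auto. rewrite D_HH; auto.
    unfold Aq, Bq, Cq. rewrite !RtoC_S. simpl (INR 0).
    replace (RtoC (TT g x - HH g x * HH g x)) with (RtoC (TT g x) - RtoC (HH g x) * RtoC (HH g x))
      by (apply Ceq; unfold Re, Im; simpl; ring).
    field; repeat split; first [apply C8_neq0|apply C6_neq0|apply C2_neq0].
    apply functional_extensionality; intros y. rewrite qq_sub1; auto.
  - change (qq (S (S (S j))) (S j) x) with
      (dC (qq (S (S j)) (S j)) x + RtoC (Derive g x) * qq (S (S j)) j x).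
    replace (qq (S (S j)) (S j)) with (fun x => Aq (S (S j)) * cpow (Derive g x) (l + RtoC (INR (S j))) * RtoC (HH g x)).
    rewrite dC_ccr; auto. rewrite D_HH; auto. rewrite IHj. rewrite cp_S.
    replace (RtoC (TT g x - HH g x * HH g x)) with (RtoC (TT g x) - RtoC (HH g x) * RtoC (HH g x))
      by (apply Ceq; unfold Re, Im; simpl; ring).
    unfold Aq, Bq, Cq. rewrite !RtoC_S.
    field; repeat split; first [apply C8_neq0|apply C6_neq0|apply C2_neq0].
    apply functional_extensionality; intros y. rewrite qq_sub1; auto.
Qed.

End Q.

Definition phin (n : nat) : CFun := fun y => cexpC (Nn n * RtoC y).

Lemma SC_phin n : smoothC (phin n).
Proof.
  unfold phin. apply SC_cexp. apply (SC_mult (fun _ => Nn n) (fun y => RtoC y)).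
  apply SC_const. apply (SC_RtoC (fun y => y)). apply SR_id.
Qed.

Lemma dC_phin n y : dC (phin n) y = Nn n * phin n y.
Proof.
  unfold phin. rewrite dC_cexp. rewrite (dC_scal (Nn n) (fun y => RtoC y)).
  rewrite (dC_RtoC (fun y => y)). rewrite Derive_id. apply Ceq; unfold Re, Im; simpl; ring.
  apply (SC_RtoC (fun y => y)). apply SR_id.
  apply (SC_mult (fun _ => Nn n) (fun y => RtoC y)).
  apply SC_const. apply (SC_RtoC (fun y => y)). apply SR_id.
Qed.

Lemma cderiv_phin n i : forall y, cderiv_n i (phin n) y = Cp (Nn n) i * phin n y.
Proof.
  induction i; intros y.
  - rewrite cderiv_0. simpl. ring.
  - rewrite cderiv_S. replace (cderiv_n i (phin n)) with (fun y => Cp (Nn n) i * phin n y).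
    rewrite dC_scal, dC_phin. simpl. ring. apply SC_phin.
    apply functional_extensionality; intros; rewrite IHi; auto.
Qed.

Lemma S1_phin n : smooth_S1 (phin n).
Proof.
  split. apply SC_phin. intros y. unfold phin, cexpC, Nn. f_equal.
  - f_equal. f_equal. simpl. ring. simpl.
    replace (0 * 0 + INR n * (y + 2 * PI))%R with (INR n * y + 2 * INR n * PI)%R by ring.
    replace (0 * 0 + INR n * y)%R with (INR n * y)%R by ring. apply cos_period.
  - f_equal. f_equal. simpl. ring. simpl.
    replace (0 * 0 + INR n * (y + 2 * PI))%R with (INR n * y + 2 * INR n * PI)%R by ring.
    replace (0 * 0 + INR n * y)%R with (INR n * y)%R by ring. apply sin_period.
Qed.

Lemma csum_first (f : nat -> C) k : (forall s, (1 <= s <= k)%nat -> f s = 0) -> csum f k = f O.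
Proof.
  induction k; intros H. reflexivity. change (csum f (S k)) with (csum f k + f (S k)). rewrite IHk, (H (S k)). ring. lia. intros; apply H; lia.
Qed.

Section Ex.
Variable g : R -> R.
Hypothesis Hg1 : smoothR g.
Hypothesis Hg2 : forall x, (0 < Derive g x)%R.
Variable l : C.
Variable k : nat.
Variable n : nat.

Lemma cderiv_psi j : (j <= k)%nat -> forall x,
  cderiv_n j (rho_inv l g (phin n)) x = phin n (g x) * csum (fun s => Cp (Nn n) s * qq g l j s x) k.
Proof.
  induction j; intros Hj x.
  - rewrite cderiv_0. unfold rho_inv. rewrite csum_first. simpl. ring.
    intros s Hs. rewrite qq_zero. ring. lia.
  - rewrite cderiv_S.
    replace (cderiv_n j (rho_inv l g (phin n))) with
      (fun x => phin n (g x) * csum (fun s => Cp (Nn n) s * qq g l j s x) k).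
    2: { apply functional_extensionality; intros; rewrite IHj; auto. lia. }
    assert (SCq : forall s, smoothC (fun x => Cp (Nn n) s * qq g l j s x)).
    { intros s. apply (SC_mult (fun _ => Cp (Nn n) s)). apply SC_const. apply SC_qq; auto. }
    rewrite (dC_mult (fun x => phin n (g x)) (fun x => csum (fun s => Cp (Nn n) s * qq g l j s x) k)).
    rewrite dC_comp, dC_phin. rewrite dC_csum.
    2: auto.
    2: apply SC_phin.
    2: auto.
    2: apply SC_comp; auto; apply SC_phin.
    2: apply SC_csum; auto.
    destruct k as [|k']. lia.
    assert (E1 : csum (fun s => Cp (Nn n) s * qq g l (S j) s x) (S k') =
       csum (fun s => Cp (Nn n) s * dC (qq g l j s) x) (S k') +
       csum (fun s => match s with O => 0 | S s' => Cp (Nn n) s * (RtoC (Derive g x) * qq g l j s' x) end) (S k')).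
    { rewrite <- csum_plus. apply csum_ext. intros s _. destruct s; simpl; ring. }
    rewrite E1, csum_shift.
    assert (E2 : csum (fun i => dC (fun x => Cp (Nn n) i * qq g l j i x) x) (S k') =
                 csum (fun s => Cp (Nn n) s * dC (qq g l j s) x) (S k')).
    { apply csum_ext. intros s _. rewrite dC_scal; auto. apply SC_qq; auto. }
    rewrite E2.
    assert (E3 : csum (fun s => Cp (Nn n) s * qq g l j s x) (S k') =
                 csum (fun s => Cp (Nn n) s * qq g l j s x) k').
    { change (csum (fun s => Cp (Nn n) s * qq g l j s x) (S k')) with
        (csum (fun s => Cp (Nn n) s * qq g l j s x) k' + Cp (Nn n) (S k') * qq g l j (S k') x).
      rewrite (qq_zero g l j (S k')). ring. lia. }
    rewrite E3. rewrite Cmult_plus_distr_l, Cplus_comm. f_equal.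
    rewrite !csum_mult_l. apply csum_ext. intros s _. simpl. ring.
Qed.

End Ex.

Lemma csum_minus (f h : nat -> C) n : csum (fun i => f i - h i) n = csum f n - csum h n.
Proof. induction n; simpl; auto. rewrite IHn. ring. Qed.

Lemma Cminus0 (u v : C) : u - v = 0 -> u = v.
Proof. intros H. replace u with (u - v + v) by ring. rewrite H; ring. Qed.

Lemma Cmult_integral' (u v : C) : u * v = 0 -> u = 0 \/ v = 0.
Proof.
  intros H. destruct (Ceq_dec u 0) as [->|Hu]; auto. right.
  replace v with (/ u * (u * v)) by (field; auto). rewrite H; ring.
Qed.

Section Ex2.
Variable g : R -> R.
Hypothesis Hg1 : smoothR g.
Hypothesis Hg2 : forall x, (0 < Derive g x)%R.
Variables (l m : C) (k : nat) (a b : nat -> CFun).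
Hypothesis Hab : forall phi, smooth_S1 phi ->
         forall x, rho_inv m g (apply_op k a phi) x = apply_op k b (rho_inv l g phi) x.

Lemma extract x : forall s, (s <= k)%nat ->
  csum (fun j => b j x * qq g l j s x) k = cpow (Derive g x) m * a s (g x).
Proof.
  intros s Hs. apply Cminus0. revert s Hs.
  apply (poly0 k (fun s => csum (fun j => b j x * qq g l j s x) k - cpow (Derive g x) m * a s (g x))).
  intros n.
  pose proof (Hab (phin n) (S1_phin n) x) as H.
  unfold rho_inv at 1, apply_op in H.
  assert (HL : cpow (Derive g x) m * csum (fun i => a i (g x) * cderiv_n i (phin n) (g x)) k =
    phin n (g x) * csum (fun s => Cp (Nn n) s * (cpow (Derive g x) m * a s (g x))) k).
  { rewrite !csum_mult_l. apply csum_ext. intros i _. rewrite cderiv_phin. ring. }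
  assert (HR : csum (fun i => b i x * cderiv_n i (rho_inv l g (phin n)) x) k =
    phin n (g x) * csum (fun s => Cp (Nn n) s * csum (fun j => b j x * qq g l j s x) k) k).
  { transitivity (csum (fun j => csum (fun s => phin n (g x) * (Cp (Nn n) s * (b j x * qq g l j s x))) k) k).
    - apply csum_ext. intros j Hj. rewrite (cderiv_psi g Hg1 Hg2 l k n j Hj). rewrite !csum_mult_l.
      apply csum_ext. intros; ring.
    - rewrite csum_swap. rewrite csum_mult_l. apply csum_ext. intros s _.
      rewrite !csum_mult_l. apply csum_ext. intros; ring. }
  rewrite HL, HR in H.
  assert (Hz : phin n (g x) * csum (fun s => Cp (Nn n) s *
     (csum (fun j => b j x * qq g l j s x) k - cpow (Derive g x) m * a s (g x))) k = 0).
  { transitivity (phin n (g x) * csum (fun s => Cp (Nn n) s * csum (fun j => b j x * qq g l j s x) k) k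
       - phin n (g x) * csum (fun s => Cp (Nn n) s * (cpow (Derive g x) m * a s (g x))) k).
    - replace (phin n (g x) * csum (fun s => Cp (Nn n) s * csum (fun j => b j x * qq g l j s x) k) k - phin n (g x) * csum (fun s => Cp (Nn n) s * (cpow (Derive g x) m * a s (g x))) k) with (phin n (g x) * (csum (fun s => Cp (Nn n) s * csum (fun j => b j x * qq g l j s x) k) k - csum (fun s => Cp (Nn n) s * (cpow (Derive g x) m * a s (g x))) k)) by ring. f_equal. rewrite <- csum_minus. apply csum_ext. intros; ring.
    - rewrite H. ring. }
  apply Cmult_integral' in Hz. destruct Hz as [Hz|Hz]; auto.
  exfalso. unfold phin in Hz. exact (cexpC_neq0 _ Hz).
Qed.

End Ex2.

Lemma dC_minus f h x : smoothC f -> smoothC h -> dC (fun y => (f y - h y)%C) x = (dC f x - dC h x)%C.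
Proof.
  intros [F1 F2] [H1 H2]. rewrite !dC_eq. apply Ceq; simpl.
  apply (Derive_minus (cre f) (cre h)); apply SR_exd; auto.
  apply (Derive_minus (cim f) (cim h)); apply SR_exd; auto.
Qed.

Lemma SC_minus f h : smoothC f -> smoothC h -> smoothC (fun y => (f y - h y)%C).
Proof. intros [] []; split; apply SR_minus; auto. Qed.

Definition isdC (f f' : CFun) := smoothC f /\ forall x, dC f x = f' x.

Lemma isdC_val f f' x : isdC f f' -> dC f x = f' x.
Proof. intros [_ H]; auto. Qed.

Lemma isdC_fun f f' : isdC f f' -> dC f = f'.
Proof. intros [_ H]; apply functional_extensionality; auto. Qed.

Lemma isdC_plus f h f' h' : isdC f f' -> isdC h h' -> isdC (fun y => f y + h y) (fun y => f' y + h' y).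
Proof. intros [Sf Df] [Sh Dh]. split. apply SC_plus; auto. intros x. rewrite dC_plus, Df, Dh; auto. Qed.

Lemma isdC_minus f h f' h' : isdC f f' -> isdC h h' -> isdC (fun y => f y - h y) (fun y => f' y - h' y).
Proof. intros [Sf Df] [Sh Dh]. split. apply SC_minus; auto. intros x. rewrite dC_minus, Df, Dh; auto. Qed.

Lemma isdC_mult f h f' h' : isdC f f' -> isdC h h' -> isdC (fun y => f y * h y) (fun y => f' y * h y + f y * h' y).
Proof. intros [Sf Df] [Sh Dh]. split. apply SC_mult; auto. intros x. rewrite dC_mult, Df, Dh; auto. Qed.

Lemma isdC_const c : isdC (fun _ => c) (fun _ => RtoC 0).
Proof. split. apply SC_const. intros; apply dC_const. Qed.

Lemma isdC_comp f g : smoothC f -> smoothR g ->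
  isdC (fun y => f (g y)) (fun y => RtoC (Derive g y) * dC f (g y)).
Proof. intros Sf Sg. split. apply SC_comp; auto. intros x. apply dC_comp; auto. Qed.

Section GD.
Variable g : R -> R.
Hypothesis Hg1 : smoothR g.
Hypothesis Hg2 : forall x, (0 < Derive g x)%R.

Lemma isdC_cp e : isdC (fun y => cpow (Derive g y) e) (fun y => e * cpow (Derive g y) e * RtoC (HH g y)).
Proof. split. apply SC_cp; auto. intros x. apply dC_cp; auto. Qed.

Lemma isdC_HH : isdC (fun y => RtoC (HH g y)) (fun y => RtoC (TT g y) - RtoC (HH g y) * RtoC (HH g y)).
Proof.
  split. apply SC_RtoC, SR_HH; auto. intros x. rewrite dC_RtoC, D_HH; auto.
  apply Ceq; unfold Re, Im; simpl; ring.
Qed.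

Lemma isdC_G1 : isdC (fun y => RtoC (Derive g y)) (fun y => RtoC (HH g y) * RtoC (Derive g y)).
Proof.
  split. apply SC_RtoC. apply SR_Derive; auto. intros x. rewrite dC_RtoC.
  assert (h := Hg2 x). apply Ceq; unfold Re, Im, HH, G1, G2; simpl. field. lra. ring.
Qed.

End GD.

Ltac cnz := repeat split; try assumption; try (let E := fresh in intro E; injection E; lra).

Lemma alg (l m kn c G h t A0 A1 A2 B0 B1 C0 : C)
  (Hnz : (kn + 1) * (kn - 2) <> 0)
  (Hlm : (l + (kn - 2) / 3) * (m - (kn + 1) / 3) + RtoC (1/36) * (kn + 1) * (kn - 2) = 0) :
  let d := m - l - kn in
  let a2 := RtoC (2/3) * kn * (kn - 1) * (kn + 3 * l - 2) * (kn + 3 * l - 2) in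
  let a1 := 2 * (kn - 1) * (kn + 3 * l - 2) * (2 - 2 * l - kn) in
  let a0 := 3 * kn * kn + 12 * l * kn + 12 * l * l - 11 * kn - 24 * l + 10 in
  let N := kn in
  let A3 := N * l + N * (N - 1) / 2 in
  let A2c := (N - 1) * l + (N - 1) * (N - 1 - 1) / 2 in
  let B3 := l * l * N * (N - 1) / 2 + l * (N * (N - 1) * (N - 2) / 2 - N * (N - 1) / 2)
            + N * (N - 1) * (N - 2) * (N - 3) / 8 in
  let C3 := l * N * (N - 1) / 2 + N * (N - 1) * (N - 2) / 6 in
  a2 * (c * (d * h * (d * h * A0 + G * A1) + d * ((t - h * h) * A0 + h * G * A1) + (h * G) * A1 + G * (G * A2)))
  + a1 * (c * (d * h * (G * B0 - A3 * h * A0) + (h * G * B0 + G * (G * B1)) - A3 * ((t - h * h) * A0 + h * G * A1)))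
  + a0 * (c * (G * G) * C0 - (c * (G * B0 - A3 * h * A0)) * A2c * h - c * A0 * (B3 * h * h + C3 * t))
  = c * (G * G) * (a2 * A2 + a1 * B1 + a0 * C0).
Proof.
  intros d a2 a1 a0 N A3 A2c B3 C3.
  assert (R36 : RtoC (1/36) = 1 / 36) by (apply Ceq; unfold Re, Im; simpl; field).
  assert (R23 : RtoC (2/3) = 2 / 3) by (apply Ceq; unfold Re, Im; simpl; field).
  unfold a2. rewrite R23. rewrite R36 in Hlm.
  assert (HL : l + (kn - 2) / 3 <> 0).
  { intros HL. rewrite HL in Hlm.
    assert (E : (1/36) * ((kn + 1) * (kn - 2)) = 0) by (rewrite <- Hlm; ring).
    destruct (Cmult_integral' _ _ E) as [E1|E1]; auto.
    apply (f_equal (fun z => z * 36)) in E1. rewrite Cmult_0_l in E1. field_simplify in E1. injection E1; lra. }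
  assert (HL3 : l * RtoC 3 + (kn - RtoC 2) <> 0).
  { intros E. apply HL. transitivity ((l * RtoC 3 + (kn - RtoC 2)) / 3). field; cnz.
    rewrite E. field; cnz. }
  assert (Hm : m = (kn + 1) / 3 - 1 / 36 * (kn + 1) * (kn - 2) / (l + (kn - 2) / 3)).
  { apply Cminus0.
    transitivity (((l + (kn - 2) / 3) * (m - (kn + 1) / 3) + 1 / 36 * (kn + 1) * (kn - 2)) / (l + (kn - 2) / 3)).
    field; cnz. rewrite Hlm. field; cnz. }
  unfold d, a2, a1, a0, A3, A2c, B3, C3, N. rewrite Hm. cbv beta. field; cnz. 
Qed.

Lemma eq_by (X Y P Q : C) : X = Y -> P - Q = X - Y -> P = Q.
Proof. intros E1 E2. apply Cminus0. rewrite E2, E1. ring. Qed.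

Lemma csum3 (f : nat -> C) K : csum f (S (S (S K))) = csum f K + f (S K) + f (S (S K)) + f (S (S (S K))).
Proof. reflexivity. Qed.

Ltac dtac := match goal with
 | |- isdC (fun _ => ?c) _ => apply isdC_const
 | |- isdC (fun y => cpow (Derive _ y) _) _ => apply isdC_cp; auto
 | |- isdC (fun y => RtoC (HH _ y)) _ => apply isdC_HH; auto
 | |- isdC (fun y => RtoC (Derive _ y)) _ => apply isdC_G1; auto
 | |- isdC (fun y => @?f y + @?h y) _ => eapply isdC_plus
 | |- isdC (fun y => @?f y - @?h y) _ => eapply isdC_minus
 | |- isdC (fun y => @?f y * @?h y) _ => eapply isdC_mult
 | |- isdC (fun y => ?F (?G y)) _ => apply isdC_comp; auto
 end.

Theorem proposition4p1 (k : nat) (Hk : (3 <= k)%nat) (l m : C)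
  (Hlm : ((l + (kC k - 2) / 3) * (m - (kC k + 1) / 3)
          + RtoC (1/36) * (kC k + 1) * (kC k - 2) = 0)%C)
  (g : R -> R) (Hg : diffeo_lift g)
  (a b : nat -> CFun)
  (Ha : forall i, (i <= k)%nat -> smooth_S1 (a i))
  (Hb : forall i, (i <= k)%nat -> smooth_S1 (b i))
  (Hab : forall phi, smooth_S1 phi ->
         forall x, rho_inv m g (apply_op k a phi) x
                   = apply_op k b (rho_inv l g phi) x) :
  forall x, Wop k l b x = rho_inv (m - l - kC k + 2)%C g (Wop k l a) x.
Proof.
  intros x.
  destruct Hg as [Hg1 [Hg2 _]].
  assert (HaS : forall i, (i <= k)%nat -> smoothC (a i)) by (intros i Hi; apply Ha; auto).
  pose proof (extract g Hg1 Hg2 l m k a b Hab) as EX.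
  destruct k as [|[|[|K]]]; try lia.
  set (d := m - l - kC (S (S (S K)))).
  set (cpl := fun j y => cpow (Derive g y) (l + RtoC (INR j))).
  assert (Z : forall y s, (S K <= s)%nat -> csum (fun j => b j y * qq g l j s y) K = 0).
  { intros y s Hs. apply csum_zero. intros i Hi. rewrite qq_zero by lia. ring. }
  assert (Hcm : forall y, cpow (Derive g y) m = cpow (Derive g y) d * cpl (S (S (S K))) y).
  { intros y. unfold cpl. rewrite <- cpow_add. apply cpow_ext. unfold d, kC. ring. }
  assert (HS2 : forall y, cpl (S (S (S K))) y = cpl (S (S K)) y * RtoC (Derive g y)).
  { intros y. unfold cpl. apply cp_S; auto. }
  assert (HS1 : forall y, cpl (S (S K)) y = cpl (S K) y * RtoC (Derive g y)).
  { intros y. unfold cpl. apply cp_S; auto. }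
  assert (Hnz : forall j y, cpl j y <> 0) by (intros; apply cpow_neq0).
  assert (Hbk : forall y, b (S (S (S K))) y = cpow (Derive g y) d * a (S (S (S K))) (g y)).
  { intros y. pose proof (EX y (S (S (S K))) (le_n _)) as E.
    rewrite csum3, Z in E by lia.
    rewrite (qq_zero g l (S K)), (qq_zero g l (S (S K))), qq_diag in E by (auto; lia).
    fold (cpl (S (S (S K))) y) in E. rewrite Hcm in E.
    transitivity (b (S (S (S K))) y * cpl (S (S (S K))) y / cpl (S (S (S K))) y). field; auto.
    replace (b (S (S (S K))) y * cpl (S (S (S K))) y) with
       (cpow (Derive g y) d * cpl (S (S (S K))) y * a (S (S (S K))) (g y)).
    field; auto. rewrite <- E. ring. }
  assert (Hbk1 : forall y, b (S (S K)) y = cpow (Derive g y) d *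
      (RtoC (Derive g y) * a (S (S K)) (g y) - Aq l (S (S (S K))) * RtoC (HH g y) * a (S (S (S K))) (g y))).
  { intros y. pose proof (EX y (S (S K)) ltac:(lia)) as E.
    rewrite csum3, Z in E by lia.
    rewrite (qq_zero g l (S K)), qq_diag, (qq_sub1 g Hg1 Hg2 l (S (S K))) in E by (auto; lia).
    fold (cpl (S (S K)) y) in E. rewrite Hcm, HS2, Hbk in E.
    transitivity (b (S (S K)) y * cpl (S (S K)) y / cpl (S (S K)) y). field; auto.
    replace (b (S (S K)) y * cpl (S (S K)) y) with
       (cpl (S (S K)) y * cpow (Derive g y) d *
      (RtoC (Derive g y) * a (S (S K)) (g y) - Aq l (S (S (S K))) * RtoC (HH g y) * a (S (S (S K))) (g y))).
    field; auto.
    eapply eq_by; [symmetry; exact E | ring]. }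
  assert (Hbk2 : forall y, b (S K) y = cpow (Derive g y) d * (RtoC (Derive g y) * RtoC (Derive g y)) * a (S K) (g y)
      - b (S (S K)) y * Aq l (S (S K)) * RtoC (HH g y)
      - b (S (S (S K))) y * (Bq l (S (S (S K))) * RtoC (HH g y) * RtoC (HH g y) + Cq l (S (S (S K))) * RtoC (TT g y))).
  { intros y. pose proof (EX y (S K) ltac:(lia)) as E.
    rewrite csum3, Z in E by lia.
    rewrite qq_diag, (qq_sub1 g Hg1 Hg2 l (S K)), (qq_sub2 g Hg1 Hg2 l (S K)) in E by auto.
    fold (cpl (S K) y) in E. rewrite Hcm, HS2, HS1 in E.
    transitivity (b (S K) y * cpl (S K) y / cpl (S K) y). field; auto.
    replace (b (S K) y * cpl (S K) y) with
       (cpl (S K) y * (cpow (Derive g y) d * (RtoC (Derive g y) * RtoC (Derive g y)) * a (S K) (g y)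
      - b (S (S K)) y * Aq l (S (S K)) * RtoC (HH g y)
      - b (S (S (S K))) y * (Bq l (S (S (S K))) * RtoC (HH g y) * RtoC (HH g y) + Cq l (S (S (S K))) * RtoC (TT g y)))).
    field; auto.
    eapply eq_by; [symmetry; exact E | ring]. }
  assert (HA3 : smoothC (a (S (S (S K))))) by (apply HaS; lia).
  assert (HA2 : smoothC (a (S (S K)))) by (apply HaS; lia).
  assert (HdA3 : smoothC (dC (a (S (S (S K)))))) by (apply SC_dC; auto).
  unfold Wop, rho_inv.
  change (S (S (S K)) - 1)%nat with (S (S K)). change (S (S (S K)) - 2)%nat with (S K).
  change (cderiv_n 2 (b (S (S (S K)))) x) with (dC (dC (b (S (S (S K))))) x).
  change (cderiv_n 2 (a (S (S (S K)))) (g x)) with (dC (dC (a (S (S (S K))))) (g x)).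
  change (cderiv_n 1 (b (S (S K))) x) with (dC (b (S (S K))) x).
  change (cderiv_n 1 (a (S (S K))) (g x)) with (dC (a (S (S K))) (g x)).
  rewrite (Hbk2 x).
  rewrite (functional_extensionality _ _ Hbk), (functional_extensionality _ _ Hbk1).
  evar (D1 : CFun).
  assert (I1 : isdC (fun y => cpow (Derive g y) d * a (S (S (S K))) (g y)) D1).
  { unfold D1. repeat dtac. }
  evar (D2 : CFun).
  assert (I2 : isdC D1 D2).
  { unfold D2, D1. cbv beta. repeat dtac. }
  evar (E1 : CFun).
  assert (J1 : isdC (fun y => cpow (Derive g y) d *
      (RtoC (Derive g y) * a (S (S K)) (g y) - Aq l (S (S (S K))) * RtoC (HH g y) * a (S (S (S K))) (g y))) E1).
  { unfold E1. repeat dtac. }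
  rewrite (isdC_fun _ _ I1), (isdC_val _ _ x I2), (isdC_val _ _ x J1).
  unfold D2, D1, E1. cbv beta.
  replace (d + 2) with (d + 1 + 1) by ring. rewrite !cpow_plus1 by auto.
  assert (Ekn : RtoC (INR (S (S K))) = RtoC (INR (S (S (S K)))) - 1) by (rewrite (RtoC_S (S (S K))); ring).
  assert (Hnz3 : RtoC (INR (S (S (S K)))) + 1 = RtoC (INR (S (S (S K)))) + 1) by reflexivity.
  assert (Hnz' : (RtoC (INR (S (S (S K)))) + 1) * (RtoC (INR (S (S (S K)))) - 2) <> 0).
  { assert (H3 : (INR (S (S (S K))) >= 3)%R) by (rewrite !S_INR; pose proof (pos_INR K); lra).
    intros E. set (r := INR (S (S (S K)))) in E, H3. apply (f_equal Re) in E. unfold Re in E. simpl in E. nra. }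
  unfold kC in Hlm, d.
  pose proof (alg l m (RtoC (INR (S (S (S K))))) (cpow (Derive g x) (m - l - RtoC (INR (S (S (S K))))))
     (RtoC (Derive g x)) (RtoC (HH g x)) (RtoC (TT g x))
     (a (S (S (S K))) (g x)) (dC (a (S (S (S K)))) (g x)) (dC (dC (a (S (S (S K))))) (g x))
     (a (S (S K)) (g x)) (dC (a (S (S K))) (g x)) (a (S K) (g x)) Hnz' Hlm) as HA.
  cbv zeta in HA.
  subst d. unfold Aq, Bq, Cq, alpha2, alpha1, alpha0, kC. cbv zeta. rewrite Ekn.
  eapply eq_by; [exact HA | field; cnz].
Qed.
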